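(* Let $d\ge 1$, $T\ge 1$, let $\mathcal{X}\subseteq\mathbb{R}^d$ be a non-empty closed convex set, and let $0<\mu\le L$. Let $f_1,\dots,f_T:\mathcal{X}\to[0,\infty)$ be differentiable with $\frac{\mu}{2}\|y-x\|^2\le f_t(y)-f_t(x)-\langle\nabla f_t(x),y-x\rangle\le\frac{L}{2}\|y-x\|^2$ for all $t$ and $x,y\in\mathcal{X}$. Let $x_1,\dots,x_T$ be the iterates of the OMGD algorithm with $K=\lceil\frac{L+\mu}{2\mu}\ln4\rceil$ from a starting point $x_0\in\mathcal{X}$. Then $$\sum_{t=1}^T\frac12\|x_t-x_{t-1}\|^2\le 5\|x_1-x_1^\star\|^2+10\mathcal{P}_{2,T}^\star.$$
   Context: $x_t^\star=\arg\min_{x\in\mathcal{X}}f_t(x)$ and $\mathcal{P}_{2,T}^\star=\sum_{t=2}^T\|x_t^\star-x_{t-1}^\star\|^2$. OMGD with parameter $K$: $x_1=x_0$; for $t=2,\dots,T$, $z_t^{(0)}=x_{t-1}$, $z_t^{(k)}=\Pi_{\mathcal{X}}\big(z_t^{(k-1)}-\frac1L\nabla f_{t-1}(z_t^{(k-1)})\big)$ ($k=1,\dots,K$), $x_t=z_t^{(K)}$, where $\Pi_{\mathcal{X}}$ is Euclidean projection onto $\mathcal{X}$. *)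

(* Defs.v *)
From HB Require Import structures.
From mathcomp Require Import all_boot all_order all_algebra.
From mathcomp Require Import all_classical all_reals all_analysis.
Set Implicit Arguments. Unset Strict Implicit. Unset Printing Implicit Defensive.
Import Order.TTheory GRing.Theory Num.Theory.
Import numFieldNormedType.Exports.
Local Open Scope classical_set_scope.
Local Open Scope ring_scope.

Section Defs.
Variables (R : realType) (d : nat).
Notation vec := 'rV[R]_d.

Definition dotv (u v : vec) : R := (u *m v^T) 0 0.
Definition sqnorm (u : vec) : R := dotv u u.

Definition grad (f : vec -> R) (x : vec) : vec :=
  \row_i ('d f x (delta_mx 0 i : vec)).

Definition is_proj (X : set vec) (w p : vec) : Prop :=
  X p /\ forall y, X y -> sqnorm (w - p) <= sqnorm (w - y).

Definition is_argmin (X : set vec) (f : vec -> R) (p : vec) : Prop :=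
  X p /\ forall y, X y -> f p <= f y.

Definition omgd (X : set vec) (f : nat -> vec -> R) (L : R) (K : nat)
  (x0 : vec) (x : nat -> vec) (T : nat) : Prop :=
  x 0%N = x0 /\ x 1%N = x0 /\
  forall t, (2 <= t <= T)%N ->
    exists z : nat -> vec,
      z 0%N = x t.-1 /\
      (forall k, (1 <= k <= K)%N ->
         is_proj X (z k.-1 - L^-1 *: grad (f t.-1) (z k.-1)) (z k)) /\
      x t = z K.

End Defs.

Definition Kparam (R : realType) (mu L : R) : nat :=
  `| Num.ceil ((L + mu) / (2 * mu) * ln (4 : R)) |%N.

(* Main.v *)
Require Import Defs.
From HB Require Import structures.
From mathcomp Require Import all_boot all_order all_algebra.
From mathcomp Require Import all_classical all_reals all_analysis.
From mathcomp Require Import ring lra.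
Import Order.TTheory GRing.Theory Num.Theory.
Import numFieldNormedType.Exports.
Local Open Scope classical_set_scope.
Local Open Scope ring_scope.

Section H.
Variables (R : realType) (d : nat).
Implicit Types (u v w : 'rV[R]_d).

Lemma dotvDl u v w : dotv (u + v) w = dotv u w + dotv v w.
Proof. by rewrite /dotv mulmxDl mxE. Qed.
Lemma dotvZl (a : R) u w : dotv (a *: u) w = a * dotv u w.
Proof. by rewrite /dotv -scalemxAl mxE. Qed.
Lemma dotvNl u w : dotv (- u) w = - dotv u w.
Proof. by rewrite /dotv mulNmx mxE. Qed.
Lemma dotvC u w : dotv u w = dotv w u.
Proof.
rewrite /dotv; have h := congr1 (fun M : 'M[R]_1 => M 0 0) (trmx_mul u (w^T)); rewrite /= trmxK in h; by rewrite -h [RHS]mxE.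
Qed.
Lemma dotvDr u v w : dotv w (u + v) = dotv w u + dotv w v.
Proof. by rewrite dotvC dotvDl !(dotvC w). Qed.
Lemma dotvZr (a : R) u w : dotv w (a *: u) = a * dotv w u.
Proof. by rewrite dotvC dotvZl dotvC. Qed.
Lemma dotvNr u w : dotv w (- u) = - dotv w u.
Proof. by rewrite dotvC dotvNl dotvC. Qed.
Lemma sqnorm_ge0 u : 0 <= sqnorm u.
Proof.
rewrite /sqnorm /dotv mxE; apply: sumr_ge0 => i _.
by rewrite mxE -expr2 sqr_ge0.
Qed.

Lemma lim0 (a b : R) : 0 <= b ->
  (forall s, 0 < s -> s <= 1 -> 2 * s * a <= s ^+ 2 * b) -> a <= 0.
Proof.
move=> b0 H; rewrite leNgt; apply/negP => a0.
have ab : 0 < a + b by lra.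
set s := a / (a + b).
have s0 : 0 < s by rewrite divr_gt0.
have s1 : s * (a + b) = a by rewrite /s mulfVK // gt_eqF.
have s1' : s <= 1 by nra.
have := H s s0 s1'. nra.
Qed.


Lemma sqnormZ (a : R) u : sqnorm (a *: u) = a ^+ 2 * sqnorm u.
Proof. by rewrite /sqnorm dotvZl dotvZr mulrA expr2. Qed.

Lemma conv_in (X : set 'rV[R]_d) p y s :
  convex_set X -> X p -> X y -> 0 <= s -> s <= 1 -> X (p + s *: (y - p)).
Proof.
move=> cX Xp Xy s0 s1.
have hs : Itv.spec (@Itv.num_sem R) (Itv.Real `[0%Z, 1%Z]) s.
  rewrite /Itv.num_sem /= num_real /= in_itv /= s0 s1 //.
have := cX y p (Itv.mk hs).
rewrite !inE => /(_ Xy Xp).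
congr X.
by rewrite /conv /= /unstable.onem scalerBl scale1r scalerBr addrCA.
Qed.

Lemma proj_vi (X : set 'rV[R]_d) w p y :
  convex_set X -> is_proj X w p -> X y -> dotv (w - p) (y - p) <= 0.
Proof.
move=> cX [Xp Hp] Xy; apply: (@lim0 _ (sqnorm (y - p))) => [|s s0 s1].
  exact: sqnorm_ge0.
have := Hp _ (@conv_in _ _ _ _ cX Xp Xy (ltW s0) s1).
have -> : w - (p + s *: (y - p)) = (w - p) - s *: (y - p) by rewrite opprD addrA.
move: (w - p) (y - p) => A B.
rewrite /sqnorm !(dotvDl, dotvDr, dotvNl, dotvNr, dotvZl, dotvZr) (dotvC B A).
rewrite expr2; nra.
Qed.

Lemma opt_fo (X : set 'rV[R]_d) (f : 'rV[R]_d -> R) L xs y :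
  convex_set X -> 0 <= L ->
  (forall u v, X u -> X v ->
     f v - f u - dotv (grad f u) (v - u) <= L / 2 * sqnorm (v - u)) ->
  is_argmin X f xs -> X y -> 0 <= dotv (grad f xs) (y - xs).
Proof.
move=> cX L0 Hup [Xxs Hmin] Xy.
rewrite -oppr_le0; apply: (@lim0 _ (L * sqnorm (y - xs))) => [|s s0 s1].
  by rewrite mulr_ge0 // sqnorm_ge0.
have Xv := @conv_in _ _ _ _ cX Xxs Xy (ltW s0) s1.
have h1 := Hmin _ Xv.
have h2 := Hup _ _ Xxs Xv.
have e : xs + s *: (y - xs) - xs = s *: (y - xs) by rewrite addrC addKr.
rewrite e dotvZr sqnormZ in h2.
rewrite expr2 in h2 *; nra.
Qed.

Lemma pg_step (X : set 'rV[R]_d) (f : 'rV[R]_d -> R) mu L xs x p :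
  convex_set X -> 0 < mu -> mu <= L ->
  (forall u v, X u -> X v ->
     mu / 2 * sqnorm (v - u) <= f v - f u - dotv (grad f u) (v - u) /\ f v - f u - dotv (grad f u) (v - u) <= L / 2 * sqnorm (v - u)) ->
  is_argmin X f xs -> X x -> is_proj X (x - L^-1 *: grad f x) p ->
  (L + mu) * sqnorm (p - xs) <= (L - mu) * sqnorm (x - xs).
Proof.
move=> cX mu0 muL Hf hxs Xx hp.
have L0 : 0 < L by apply: lt_le_trans muL.
have Xp := hp.1. have Xxs := hxs.1.
have vi := @proj_vi _ _ _ _ cX hp Xxs.
have opt := @opt_fo _ _ _ _ _ cX (ltW L0) (fun u v (Xu : X u) (Xv : X v) => (Hf u v Xu Xv).2) hxs Xp.
have [_ up] := Hf _ _ Xx Xp.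
have [lo1 _] := Hf _ _ Xx Xxs.
have [lo2 _] := Hf _ _ Xxs Xp.
move: vi up lo1 lo2 opt.
set g := grad f x; set gs := grad f xs => vi up lo1 lo2 opt.
have vi' : L * dotv (x - p) (xs - p) <= dotv g (xs - p).
  have e : x - L^-1 *: g - p = (x - p) - L^-1 *: g by rewrite addrAC.
  rewrite e dotvDl dotvNl dotvZl in vi.
  have hLi : L * L^-1 = 1 by rewrite mulfV // gt_eqF.
  move: vi; move: (dotv (x - p) (xs - p)) (dotv g (xs - p)) => a b vi.
  have h : 0 <= L * (- (a - L^-1 * b)) by rewrite mulr_ge0 ?oppr_ge0 // ltW.
  rewrite mulrN mulrBr mulrA hLi mul1r in h; lra.
clear vi.
move: vi' up lo1 lo2 opt.
clearbody g gs.
rewrite /sqnorm !(dotvDl, dotvDr, dotvNl, dotvNr, dotvZl, dotvZr).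
rewrite (dotvC p x) (dotvC xs x) (dotvC xs p).
move: (dotv x xs) (dotv x p) (dotv p xs) (dotv p p) (dotv g xs) (dotv g p) (dotv g x) (dotv x x) (dotv xs xs) (dotv gs p) (dotv gs xs) (f p) (f x) (f xs) => *.
lra.
Qed.

Lemma sqnormN u : sqnorm (- u) = sqnorm u.
Proof. by rewrite /sqnorm dotvNl dotvNr opprK. Qed.

Lemma sqnorm_sym u v : sqnorm (u - v) = sqnorm (v - u).
Proof. by rewrite -sqnormN opprB. Qed.

Lemma sqD2 u v : sqnorm (u + v) <= 2 * sqnorm u + 2 * sqnorm v.
Proof.
have := sqnorm_ge0 (u - v).
rewrite /sqnorm !(dotvDl, dotvDr, dotvNl, dotvNr) (dotvC v u).
move: (dotv u u) (dotv u v) (dotv v v) => *; lra.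
Qed.

Lemma sqD3 u v : sqnorm (u + v) <= 3 * sqnorm u + 3 / 2 * sqnorm v.
Proof.
have := sqnorm_ge0 (2 *: u - v).
rewrite /sqnorm !(dotvDl, dotvDr, dotvNl, dotvNr, dotvZl, dotvZr) (dotvC v u).
move: (dotv u u) (dotv u v) (dotv v v) => *; lra.
Qed.

Lemma sqnorm0 : sqnorm (0 : 'rV[R]_d) = 0.
Proof. by rewrite /sqnorm /dotv mul0mx mxE. Qed.

Lemma iter_contr (X : set 'rV[R]_d) (f : 'rV[R]_d -> R) mu L xs K
  (z : nat -> 'rV[R]_d) :
  convex_set X -> 0 < mu -> mu <= L ->
  (forall u v, X u -> X v ->
     mu / 2 * sqnorm (v - u) <= f v - f u - dotv (grad f u) (v - u) /\ f v - f u - dotv (grad f u) (v - u) <= L / 2 * sqnorm (v - u)) ->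
  is_argmin X f xs -> X (z 0%N) ->
  (forall k, (1 <= k <= K)%N ->
     is_proj X (z k.-1 - L^-1 *: grad f (z k.-1)) (z k)) ->
  forall k, (k <= K)%N ->
    X (z k) /\ sqnorm (z k - xs) <= ((L - mu) / (L + mu)) ^+ k * sqnorm (z 0%N - xs).
Proof.
move=> cX mu0 muL Hf hxs Xz0 Hz; elim=> [|k IH] kK.
  by split => //; rewrite expr0 mul1r.
have [Xzk Hk] := IH (ltnW kK).
have hp := Hz k.+1 kK; rewrite /= in hp.
split; first exact: hp.1.
have := @pg_step _ _ _ _ _ _ _ cX mu0 muL Hf hxs Xzk hp.
have L0 : 0 < L + mu by rewrite addr_gt0 // (lt_le_trans mu0 muL).
have q0 : 0 <= (L - mu) / (L + mu) by rewrite divr_ge0 // ?subr_ge0 // ltW.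
move=> h.
have h' : sqnorm (z k.+1 - xs) <= (L - mu) / (L + mu) * sqnorm (z k - xs).
  by rewrite mulrAC ler_pdivlMr // mulrC.
apply: (le_trans h'); move: q0 Hk h'; set q := (L - mu) / (L + mu) => q0 Hk _.
rewrite exprS -mulrA.
nra.
Qed.

Lemma Kparam_bound (mu L : R) : 0 < mu -> mu <= L ->
  ((L - mu) / (L + mu)) ^+ (Kparam mu L) <= 4^-1.
Proof.
move=> mu0 muL.
have L0 : 0 < L + mu by rewrite addr_gt0 // (lt_le_trans mu0 muL).
set a := 2 * mu / (L + mu).
have qa : (L - mu) / (L + mu) = 1 - a.
  rewrite /a; field; exact: lt0r_neq0.
have a0 : 0 < a by rewrite /a divr_gt0 // mulr_gt0.
have a1 : a <= 1 by rewrite /a ler_pdivrMr // mul1r; lra.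
set c := (L + mu) / (2 * mu) * ln (4 : R).
have ln40 : 0 <= ln (4 : R) by rewrite ln_ge0 // ler1n.
have c0 : 0 <= c by rewrite /c mulr_ge0 // divr_ge0 // ?mulr_ge0 // ltW.
have hK : c <= (Kparam mu L)%:R.
  rewrite /Kparam natr_absz ger0_norm ?ceil_ge0; first exact: ceil_ge.
  by apply: lt_le_trans c0; rewrite ltrN10.
have ac : a * c = ln (4 : R).
  rewrite /a /c; field; apply/andP; split; apply: lt0r_neq0 => //; lra.
rewrite qa.
have e1 : 1 - a <= expR (- a) by have := expR_ge1Dx (- a); lra.
apply: (le_trans (lerXn2r _ _ _ e1)).
- by rewrite nnegrE subr_ge0.
- by rewrite nnegrE expR_ge0.
rewrite -expRM_natl.
have -> : (4 : R)^-1 = expR (- ln (4 : R)).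
  by rewrite expRN lnK // posrE.
rewrite ler_expR -ac.
have : a * c <= a * (Kparam mu L)%:R by rewrite ler_wpM2l // ltW.
lra.
Qed.

Lemma sum_bound (T : nat) (A D P : nat -> R) : (0 < T)%N -> A 1%N = 0 ->
  (forall t, 0 <= D t) -> (forall t, 0 <= P t) ->
  (forall t, (2 <= t <= T)%N -> A t <= 9/8 * D t.-1 /\ D t <= D t.-1 / 2 + 2 * P t) ->
  \sum_(1 <= t < T.+1) A t <= 5 * D 1%N + 10 * \sum_(2 <= t < T.+1) P t.
Proof.
move=> T0 A1 D0 P0 H.
have claim : forall n, (1 <= n <= T)%N ->
  \sum_(1 <= t < n.+1) A t + 9/8 * D n <= 9/8 * \sum_(1 <= t < n.+1) D t /\
  \sum_(1 <= t < n.+1) D t + D n <= 2 * D 1%N + 4 * \sum_(2 <= t < n.+1) P t.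
  elim=> [//|n IH] /andP [_ nT].
  case: n IH nT => [|n] IH nT.
    rewrite !big_nat1 big_geq // A1; split; lra.
  have hn : (1 <= n.+1 <= T)%N by apply/andP; split => //; exact: ltnW.
  have [IH1 IH2] := IH hn.
  have hn2 : (2 <= n.+2 <= T)%N by apply/andP; split.
  have [h1 h2] := H _ hn2.
  rewrite /= in h1 h2.
  have eA : \sum_(1 <= t < n.+3) A t = \sum_(1 <= t < n.+2) A t + A n.+2 by rewrite big_nat_recr.
  have eD : \sum_(1 <= t < n.+3) D t = \sum_(1 <= t < n.+2) D t + D n.+2 by rewrite big_nat_recr.
  have eP : \sum_(2 <= t < n.+3) P t = \sum_(2 <= t < n.+2) P t + P n.+2 by rewrite big_nat_recr.
  rewrite eA eD eP.
  have D1 := D0 n.+1; have D2 := D0 n.+2; have P2 := P0 n.+2.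
  move: IH1 IH2 h1 h2; move: (\sum_(1 <= t < n.+2) A t) (\sum_(1 <= t < n.+2) D t) (\sum_(2 <= t < n.+2) P t) => *.
  split; lra.
have [c1 c2] := claim T (introT andP (conj T0 (leqnn T))).
have DT := D0 T; have D1 := D0 1%N.
have Ps : 0 <= \sum_(2 <= t < T.+1) P t by apply: sumr_ge0 => t _.
move: c1 c2 Ps; move: (\sum_(1 <= t < T.+1) A t) (\sum_(1 <= t < T.+1) D t) (\sum_(2 <= t < T.+1) P t) => *.
lra.
Qed.
End H.

Theorem lemma3 (R : realType) (d T : nat) (X : set 'rV[R]_d) (mu L : R)
  (f : nat -> 'rV[R]_d -> R) (x0 : 'rV[R]_d) (x xs : nat -> 'rV[R]_d) :
  (0 < d)%N -> (0 < T)%N ->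
  X !=set0 -> closed X -> convex_set X ->
  0 < mu -> mu <= L ->
  (forall t, (1 <= t <= T)%N -> forall y, X y -> differentiable (f t) y) ->
  (forall t, (1 <= t <= T)%N -> forall y, X y -> 0 <= f t y) ->
  (forall t, (1 <= t <= T)%N -> forall u v, X u -> X v ->
     mu / 2 * sqnorm (v - u) <= f t v - f t u - dotv (grad (f t) u) (v - u) /\
     f t v - f t u - dotv (grad (f t) u) (v - u) <= L / 2 * sqnorm (v - u)) ->
  X x0 ->
  (forall t, (1 <= t <= T)%N -> is_argmin X (f t) (xs t)) ->
  omgd X f L (Kparam mu L) x0 x T ->
  \sum_(1 <= t < T.+1) 2^-1 * sqnorm (x t - x t.-1)
    <= 5 * sqnorm (x 1%N - xs 1%N)
       + 10 * \sum_(2 <= t < T.+1) sqnorm (xs t - xs t.-1).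

Proof.
move=> d0 T0 Xne Xcl cX mu0 muL Hdiff Hpos Hf Xx0 Hxs [ex0 [ex1 Hst]].
have XT : forall t, (1 <= t <= T)%N -> X (x t).
  elim=> [//|t IH] /andP [_ tT].
  case: t IH tT => [|t] IH tT; first by rewrite ex1.
  have ht2 : (2 <= t.+2 <= T)%N by apply/andP; split.
  have ht1 : (1 <= t.+1 <= T)%N by apply/andP; split => //; exact: ltnW.
  have [z [z0 [Hz ->]]] := Hst t.+2 ht2.
  have Xz0 : X (z 0%N) by rewrite z0; exact: IH.
  have HH := @iter_contr _ _ _ _ _ _ _ _ _ cX mu0 muL (Hf _ ht1) (Hxs _ ht1) Xz0.
  exact: (proj1 (HH _ Hz _ (leqnn _))).
have contr : forall t, (2 <= t <= T)%N ->
    sqnorm (x t - xs t.-1) <= 4^-1 * sqnorm (x t.-1 - xs t.-1).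
  move=> t ht; have /andP [t2 tT] := ht.
  have ht1 : (1 <= t.-1 <= T)%N.
    by apply/andP; split; [rewrite -ltnS prednK // ltnW | apply: leq_trans (leq_pred t) tT].
  have [z [z0 [Hz ->]]] := Hst t ht.
  have Xz0 : X (z 0%N) by rewrite z0; exact: XT.
  have HH := @iter_contr _ _ _ _ _ _ _ _ _ cX mu0 muL (Hf _ ht1) (Hxs _ ht1) Xz0.
  have [_ h] := HH _ Hz _ (leqnn _).
  rewrite -z0; apply: (le_trans h).
  apply: ler_wpM2r; first exact: sqnorm_ge0.
  exact: Kparam_bound.
apply: (@sum_bound _ T (fun t => 2^-1 * sqnorm (x t - x t.-1))
   (fun t => sqnorm (x t - xs t)) (fun t => sqnorm (xs t - xs t.-1))) => //.
- by rewrite /= ex1 ex0 subrr sqnorm0 mulr0.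
- by move=> t; exact: sqnorm_ge0.
- by move=> t; exact: sqnorm_ge0.
move=> t ht; have c := contr t ht.
have h3 := @sqD3 _ _ (x t - xs t.-1) (xs t.-1 - x t.-1).
rewrite addrA subrK (@sqnorm_sym _ _ (xs t.-1)) in h3.
have h2 := @sqD2 _ _ (x t - xs t.-1) (xs t.-1 - xs t).
rewrite addrA subrK (@sqnorm_sym _ _ (xs t.-1)) in h2.
move: c h3 h2; move: (sqnorm (x t - xs t.-1)) (sqnorm (x t.-1 - xs t.-1)) (sqnorm (x t - x t.-1)) (sqnorm (x t - xs t)) (sqnorm (xs t - xs t.-1)) => *.
split; lra.
Qed.
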